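(* Let $S_\infty$ be the group of all permutations of $\mathbb{N}$ with composition $pq=p\circ q$ and the topology of pointwise convergence, and let $P\subseteq S_\infty$ be the set of all permutations having at least one infinite cycle. Then for every compact set $K\subseteq S_\infty$ there is $p\in S_\infty$ with $pK\subseteq P$. Consequently $P$ is not Haar meager in $S_\infty$, although $P$ is meager in $S_\infty$.
   Context: Let $G$ be a Polish group. A set $A\subseteq G$ is Haar meager if there exist a Borel set $B\supseteq A$, a compact metric space $K$ and a continuous map $f\colon K\to G$ such that $f^{-1}(gBh)$ is meager in $K$ for every $g,h\in G$. *)

(* Defs.v *)
From Stdlib Require Import Reals ZArith List.
Open Scope R_scope.

Record Sinf : Type := MkSinf {
  fwd : nat -> nat;
  bwd : nat -> nat;
  fwd_bwd : forall n, fwd (bwd n) = n;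
  bwd_fwd : forall n, bwd (fwd n) = n }.

Definition smul (p q : Sinf) : Sinf.
Proof.
  refine (MkSinf (fun n => fwd p (fwd q n)) (fun n => bwd q (bwd p n)) _ _);
  intro n; rewrite ?fwd_bwd, ?bwd_fwd; reflexivity.
Defined.

Definition inv (p : Sinf) : Sinf :=
  MkSinf (bwd p) (fwd p) (bwd_fwd p) (fwd_bwd p).

Definition Sinf_open (U : Sinf -> Prop) : Prop :=
  forall p, U p -> exists N : nat,
    forall q, (forall n, (n < N)%nat -> fwd q n = fwd p n) -> U q.

Definition zpow (p : Sinf) (k : Z) (n : nat) : nat :=
  match k with
  | Z0 => n
  | Zpos m => Nat.iter (Pos.to_nat m) (fwd p) n
  | Zneg m => Nat.iter (Pos.to_nat m) (bwd p) n
  end.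

Definition cycle_of (p : Sinf) (n : nat) (m : nat) : Prop :=
  exists k : Z, zpow p k n = m.

Definition finite_set (A : nat -> Prop) : Prop :=
  exists l : list nat, forall m, A m -> In m l.

Definition has_infinite_cycle (p : Sinf) : Prop :=
  exists n, ~ finite_set (cycle_of p n).

Definition compact_in {X : Type} (op : (X -> Prop) -> Prop) (A : X -> Prop) : Prop :=
  forall C : (X -> Prop) -> Prop,
    (forall U, C U -> op U) ->
    (forall x, A x -> exists U, C U /\ U x) ->
    exists l : list (X -> Prop),
      (forall U, In U l -> C U) /\ (forall x, A x -> exists U, In U l /\ U x).

Definition closure {X : Type} (op : (X -> Prop) -> Prop) (A : X -> Prop) (x : X) : Prop :=
  forall U, op U -> U x -> exists y, U y /\ A y.

Definition nowhere_dense {X : Type} (op : (X -> Prop) -> Prop) (A : X -> Prop) : Prop :=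
  forall U, op U -> (forall x, U x -> closure op A x) -> forall x, ~ U x.

Definition meager {X : Type} (op : (X -> Prop) -> Prop) (A : X -> Prop) : Prop :=
  exists F : nat -> X -> Prop,
    (forall n, nowhere_dense op (F n)) /\ (forall x, A x -> exists n, F n x).

Inductive borel {X : Type} (op : (X -> Prop) -> Prop) : (X -> Prop) -> Prop :=
  | borel_open : forall U, op U -> borel op U
  | borel_compl : forall A, borel op A -> borel op (fun x => ~ A x)
  | borel_cunion : forall F : nat -> X -> Prop,
      (forall n, borel op (F n)) -> borel op (fun x => exists n, F n x)
  | borel_ext : forall A B, borel op A -> (forall x, A x <-> B x) -> borel op B.

Definition continuous {X Y : Type} (opX : (X -> Prop) -> Prop)
  (opY : (Y -> Prop) -> Prop) (f : X -> Y) : Prop :=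
  forall V, opY V -> opX (fun x => V (f x)).

Definition is_metric {K : Type} (d : K -> K -> R) : Prop :=
  (forall x y, 0 <= d x y) /\
  (forall x y, d x y = 0 <-> x = y) /\
  (forall x y, d x y = d y x) /\
  (forall x y z, d x z <= d x y + d y z).

Definition metric_open {K : Type} (d : K -> K -> R) (U : K -> Prop) : Prop :=
  forall x, U x -> exists eps, 0 < eps /\ forall y, d x y < eps -> U y.

(* Haar meager subsets of S_infinity.  g B h is written as the set of x with
   g^{-1} x h^{-1} in B.  The compact metric space K is required nonempty. *)
Definition haar_meager (A : Sinf -> Prop) : Prop :=
  exists B : Sinf -> Prop,
    borel Sinf_open B /\ (forall x, A x -> B x) /\
    exists (K : Type) (d : K -> K -> R),
      inhabited K /\ is_metric d /\ compact_in (metric_open d) (fun _ => True) /\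
      exists f : K -> Sinf,
        continuous (metric_open d) Sinf_open f /\
        forall g h : Sinf,
          meager (metric_open d)
                 (fun k => B (smul (inv g) (smul (f k) (inv h)))).

(* Main.v *)
Require Import Defs.
From Stdlib Require Import Reals ZArith List Lia Lra Classical ClassicalEpsilon FunctionalExtensionality ProofIrrelevance.
Open Scope nat_scope.

Open Scope nat_scope.

Lemma iter_succ_r {A} (f : A -> A) k a : Nat.iter (S k) f a = Nat.iter k f (f a).
Proof. induction k; simpl in *; congruence. Qed.

Lemma iter_add {A} (f:A->A) i j a : Nat.iter (i + j) f a = Nat.iter i f (Nat.iter j f a).
Proof. induction i; simpl; congruence. Qed.

Lemma iter_comm {A} (f : A -> A) k a : f (Nat.iter k f a) = Nat.iter k f (f a).
Proof. induction k; simpl; congruence. Qed.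

Lemma iter_bf (x : Sinf) i a : Nat.iter i (bwd x) (Nat.iter i (fwd x) a) = a.
Proof.
  revert a; induction i; intro a; simpl; auto.
  rewrite iter_comm, bwd_fwd. apply IHi.
Qed.

Lemma iter_cancel (x : Sinf) i j a : i <= j ->
  Nat.iter i (fwd x) a = Nat.iter j (fwd x) a -> a = Nat.iter (j - i) (fwd x) a.
Proof.
  intros Hij H. replace j with (i + (j - i)) in H by lia.
  rewrite iter_add in H.
  apply (f_equal (Nat.iter i (bwd x))) in H. rewrite !iter_bf in H. exact H.
Qed.

Lemma pigeon : forall N (f : nat -> nat), (forall i, i <= N -> f i < N) ->
  exists i j, i < j <= N /\ f i = f j.
Proof.
  induction N; intros f Hf.
  - specialize (Hf 0 (le_n 0)). lia.
  - destruct (classic (exists i, i <= N /\ f i = f (S N))) as [[i [Hi He]]|Hn].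
    + exists i, (S N). split; [lia|auto].
    + set (v := f (S N)).
      destruct (IHN (fun i => if Nat.eqb (f i) N then v else f i)) as (i & j & Hij & He).
      * intros i Hi. specialize (Hf i ltac:(lia)) as Hfi.
        destruct (Nat.eqb_spec (f i) N).
        -- assert (Hv: f (S N) < S N) by (apply Hf; lia).
           assert (v <> N). { intro E. apply Hn. exists i. split; [lia|]. unfold v in E. congruence. }
           unfold v in *. lia.
        -- lia.
      * exists i, j. split; [lia|].
        destruct (Nat.eqb_spec (f i) N), (Nat.eqb_spec (f j) N); try congruence.
        -- exfalso. apply Hn. exists j. split; [lia|]. unfold v in He. congruence.
        -- exfalso. apply Hn. exists i. split; [lia|]. unfold v in He. congruence.
Qed.

Lemma least : forall (P : nat -> Prop), (exists n, P n) -> exists n, P n /\ forall m, m < n -> ~ P m.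
Proof.
  intros P [n Hn]. apply NNPP. intro Hno.
  assert (forall k, forall m, m <= k -> ~ P m).
  { induction k; intros m Hm HP.
    - apply Hno. exists m. split; auto. intros m' Hm'. lia.
    - apply Hno. exists m. split; auto. intros m' Hm'. apply IHk. lia. }
  exact (H n n (le_n n) Hn).
Qed.

Lemma In_le_max y L : In y L -> y <= list_max L.
Proof.
  intro H. assert (Forall (fun k => k <= list_max L) L) by (apply list_max_le; lia).
  rewrite Forall_forall in H0. auto.
Qed.

Definition swf (a b y : nat) := if Nat.eqb y a then b else if Nat.eqb y b then a else y.
Lemma swf_inv a b y : swf a b (swf a b y) = y.
Proof.
  unfold swf. destruct (Nat.eqb_spec y a).
  - rewrite (proj2 (Nat.eqb_eq b b) eq_refl). destruct (Nat.eqb_spec b a); congruence.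
  - destruct (Nat.eqb_spec y b).
    + rewrite (proj2 (Nat.eqb_eq a a) eq_refl). auto.
    + destruct (Nat.eqb_spec y a); [congruence|]. destruct (Nat.eqb_spec y b); congruence.
Qed.
Definition swap (a b : nat) : Sinf := MkSinf (swf a b) (swf a b) (swf_inv a b) (swf_inv a b).

Lemma fin_cycle (r : Sinf) (L : list nat) n : In n L ->
  (forall y, In y L -> In (fwd r y) L) ->
  (forall y, In y L -> exists z, In z L /\ fwd r z = y) ->
  finite_set (cycle_of r n).
Proof.
  intros Hn Hf Hs. assert (Hb: forall y, In y L -> In (bwd r y) L).
  { intros y Hy. destruct (Hs y Hy) as [z [Hz <-]]. rewrite bwd_fwd. exact Hz. }
  exists L. intros m [k <-]. destruct k as [|p|p]; unfold zpow.
  - exact Hn.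
  - generalize (Pos.to_nat p). intro i. induction i; simpl; auto.
  - generalize (Pos.to_nat p). intro i. induction i; simpl; auto.
Qed.

Definition good (q : Sinf) (L : list nat) (n : nat) :=
  In n L /\ (forall y, In y L -> In (fwd q y) L) /\
  (forall y, In y L -> exists z, In z L /\ fwd q z = y).

Lemma good_inv q L n : good (inv q) L n -> good q L n.
Proof.
  intros (Hn & Hf & Hs). split; [auto|split].
  - intros y Hy. destruct (Hs y Hy) as [z [Hz <-]]. simpl. rewrite fwd_bwd. auto.
  - intros y Hy. exists (bwd q y). split; [apply (Hf y Hy)|]. apply fwd_bwd.
Qed.

Lemma periodic_good (x : Sinf) n d : 1 <= d -> Nat.iter d (fwd x) n = n ->
  good x (map (fun t => Nat.iter t (fwd x) n) (seq 0 d)) n.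
Proof.
  intros Hd Hp. split; [|split].
  - apply in_map_iff. exists 0. split; auto. apply in_seq. lia.
  - intros y Hy. apply in_map_iff in Hy. destruct Hy as [t [<- Ht]]. apply in_seq in Ht.
    apply in_map_iff. destruct (Nat.eq_dec (S t) d).
    + exists 0. split; [|apply in_seq; lia]. simpl. rewrite <- Hp at 1. subst d. reflexivity.
    + exists (S t). split; [reflexivity|apply in_seq; lia].
  - intros y Hy. apply in_map_iff in Hy. destruct Hy as [t [<- Ht]]. apply in_seq in Ht.
    destruct t as [|t].
    + exists (Nat.iter (d - 1) (fwd x) n). split.
      * apply in_map_iff. exists (d-1). split; auto. apply in_seq. lia.
      * assert (E: Nat.iter d (fwd x) n = fwd x (Nat.iter (d-1) (fwd x) n))
          by (destruct d as [|d']; [lia|]; simpl; replace (d' - 0) with d' by lia; reflexivity).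
        simpl. rewrite <- E. auto.
    + exists (Nat.iter t (fwd x) n). split; [|reflexivity].
      apply in_map_iff. exists t. split; auto. apply in_seq. lia.
Qed.

Open Scope nat_scope.

Lemma swf_other a b y : y <> a -> y <> b -> swf a b y = y.
Proof. intros H1 H2. unfold swf. destruct (Nat.eqb_spec y a); [congruence|].
  destruct (Nat.eqb_spec y b); congruence. Qed.
Lemma swf_b a b : swf a b b = a.
Proof. unfold swf. destruct (Nat.eqb_spec b a); auto. rewrite Nat.eqb_refl. auto. Qed.

Lemma fwd_smul p q y : fwd (smul p q) y = fwd p (fwd q y).
Proof. reflexivity. Qed.
Lemma fwd_swap a b y : fwd (swap a b) y = swf a b y.
Proof. reflexivity. Qed.

Lemma close_cycle (x : Sinf) (N n : nat) : exists (q : Sinf) (L : list nat),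
  (forall y, y < N -> fwd q y = fwd x y) /\ good q L n.
Proof.
  set (a := fun t => Nat.iter t (fwd x) n).
  set (b := fun t => Nat.iter t (bwd x) n).
  destruct (classic (exists i, N <= a i)) as [HF1|HF2].
  2: {
    assert (Ha: forall i, i <= N -> a i < N).
    { intros i _. destruct (Nat.lt_ge_cases (a i) N); auto. exfalso; apply HF2; eauto. }
    destruct (pigeon N a Ha) as (i & j & Hij & He).
    apply iter_cancel in He; [|lia].
    exists x, (map (fun t => Nat.iter t (fwd x) n) (seq 0 (j - i))). split; [auto|].
    apply periodic_good; [lia|auto]. }
  destruct (classic (exists m, N <= b (S m))) as [HB1|HB2].
  2: {
    assert (Hb: forall i, i <= N -> b (S i) < N).
    { intros i _. destruct (Nat.lt_ge_cases (b (S i)) N); auto. exfalso; apply HB2; eauto. }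
    destruct (pigeon N (fun i => b (S i)) Hb) as (i & j & Hij & He).
    change (Nat.iter (S i) (fwd (inv x)) n = Nat.iter (S j) (fwd (inv x)) n) in He.
    apply iter_cancel in He; [|lia].
    exists x, (map (fun t => Nat.iter t (fwd (inv x)) n) (seq 0 (S j - S i))). split; [auto|].
    apply good_inv. apply periodic_good; [lia|auto]. }
  destruct (least _ HF1) as [i [Hi Hil]].
  destruct (least _ HB1) as [m [Hm Hml]].
  set (w := b m). set (u := a i).
  exists (smul (swap w (fwd x u)) x).
  exists (map b (seq 0 (S m)) ++ map a (seq 0 (S i))).
  assert (Hbb: forall s, fwd x (b (S s)) = b s).
  { intro s. unfold b. simpl. apply fwd_bwd. }
  assert (Hbb': forall s, bwd x (b s) = b (S s)) by (intro s; reflexivity).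
  assert (Haa: forall t, a (S t) = fwd x (a t)) by (intro t; reflexivity).
  assert (Haa': forall t, bwd x (a (S t)) = a t).
  { intro t. rewrite Haa. apply bwd_fwd. }
  assert (Hab: a 0 = b 0) by reflexivity.
  assert (HbN: forall s, 1 <= s <= m -> b s < N).
  { intros s Hs. destruct s as [|s']; [lia|].
    destruct (Nat.lt_ge_cases (b (S s')) N); auto. exfalso; apply (Hml s'); [lia|auto]. }
  assert (HaN: forall t, t < i -> a t < N).
  { intros t Ht. destruct (Nat.lt_ge_cases (a t) N); auto. exfalso; apply (Hil t); auto. }
  assert (Hq_b: forall s, 1 <= s <= m -> fwd (smul (swap w (fwd x u)) x) (b s) = b (s - 1)).
  { intros s Hs. destruct s as [|s']; [lia|]. rewrite fwd_smul, fwd_swap. rewrite Hbb.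
    replace (S s' - 1) with s' by lia. apply swf_other.
    - intro E. assert (E2: bwd x (b s') = bwd x w) by congruence.
      unfold w in E2. rewrite !Hbb' in E2. specialize (HbN (S s') ltac:(lia)). lia.
    - intro E. rewrite <- (Hbb s') in E. apply (f_equal (bwd x)) in E. rewrite !bwd_fwd in E.
      specialize (HbN (S s') ltac:(lia)). unfold u in E. lia. }
  assert (Hq_a: forall t, t < i -> fwd (smul (swap w (fwd x u)) x) (a t) = a (S t)).
  { intros t Ht. rewrite fwd_smul, fwd_swap. rewrite <- Haa. apply swf_other.
    - intro E. apply (f_equal (bwd x)) in E. rewrite Haa' in E. unfold w in E. rewrite Hbb' in E.
      specialize (HaN t Ht). lia.
    - intro E. rewrite Haa in E. apply (f_equal (bwd x)) in E. rewrite !bwd_fwd in E.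
      specialize (HaN t Ht). unfold u in E. lia. }
  assert (Hq_u: fwd (smul (swap w (fwd x u)) x) u = w).
  { rewrite fwd_smul, fwd_swap. apply swf_b. }
  assert (inb: forall s, s <= m -> In (b s) (map b (seq 0 (S m)) ++ map a (seq 0 (S i)))).
  { intros s Hs. apply in_or_app. left. apply in_map. apply in_seq. lia. }
  assert (ina: forall t, t <= i -> In (a t) (map b (seq 0 (S m)) ++ map a (seq 0 (S i)))).
  { intros t Ht. apply in_or_app. right. apply in_map. apply in_seq. lia. }
  split.
  { intros y Hy. rewrite fwd_smul, fwd_swap. apply swf_other.
    - intro E. apply (f_equal (bwd x)) in E. rewrite bwd_fwd in E. unfold w in E.
      rewrite Hbb' in E. lia.
    - intro E. apply (f_equal (bwd x)) in E. rewrite !bwd_fwd in E. unfold u in E. lia. }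
  assert (Hfa: forall t, t <= i -> In (fwd (smul (swap w (fwd x u)) x) (a t))
                 (map b (seq 0 (S m)) ++ map a (seq 0 (S i)))).
  { intros t Ht. destruct (Nat.eq_dec t i).
    - subst t. fold u. rewrite Hq_u. apply inb. lia.
    - rewrite Hq_a by lia. apply ina. lia. }
  assert (Hsb: forall s, s <= m -> exists z, In z (map b (seq 0 (S m)) ++ map a (seq 0 (S i))) /\
                 fwd (smul (swap w (fwd x u)) x) z = b s).
  { intros s Hs. destruct (Nat.eq_dec s m).
    - subst s. exists u. split; [apply ina; lia|]. apply Hq_u.
    - exists (b (S s)). split; [apply inb; lia|]. rewrite Hq_b by lia. f_equal. lia. }
  split; [|split].
  - change n with (a 0). apply ina. lia.
  - intros y Hy. apply in_app_or in Hy. destruct Hy as [Hy|Hy];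
      apply in_map_iff in Hy; destruct Hy as [s [<- Hs]]; apply in_seq in Hs.
    + destruct s as [|s].
      * rewrite <- Hab. apply Hfa. lia.
      * rewrite Hq_b by lia. apply inb. lia.
    + apply Hfa. lia.
  - intros y Hy. apply in_app_or in Hy. destruct Hy as [Hy|Hy];
      apply in_map_iff in Hy; destruct Hy as [s [<- Hs]]; apply in_seq in Hs.
    + apply Hsb. lia.
    + destruct s as [|s].
      * rewrite Hab. apply Hsb. lia.
      * exists (a s). split; [apply ina; lia|]. apply Hq_a. lia.
Qed.

Lemma part3 : meager Sinf_open has_infinite_cycle.
Proof.
  exists (fun n p => ~ finite_set (cycle_of p n)). split.
  - intros n U HU Hcl x Ux. destruct (HU x Ux) as [N HN].
    destruct (close_cycle x N n) as (q & L & Hag & Hn & Hf & Hs).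
    set (M := S (list_max L)).
    assert (Uq : U q) by (apply HN; intros y Hy; rewrite Hag; auto).
    destruct (Hcl q Uq (fun r => forall y, y < M -> fwd r y = fwd q y)) as [r [Vr Fr]].
    + intros r Hr. exists M. intros r' Hr' y Hy. rewrite Hr' by auto. auto.
    + auto.
    + apply Fr. 
      assert (HL: forall y, In y L -> fwd r y = fwd q y).
      { intros y Hy. apply Vr. unfold M. pose proof (In_le_max y L Hy). lia. }
      apply (fin_cycle r L n Hn).
      * intros y Hy. rewrite HL by auto. auto.
      * intros y Hy. destruct (Hs y Hy) as [z [Hz Hz']]. exists z. rewrite HL; auto.
  - intros p [n Hn]. exists n. exact Hn.
Qed.

Open Scope nat_scope.

Definition ind (A : nat -> Prop) (x : nat) : nat :=
  if excluded_middle_informative (A x) then 1 else 0.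
Fixpoint rank (A : nat -> Prop) (x : nat) : nat :=
  match x with 0 => 0 | S x' => rank A x' + ind A x' end.

Lemma rank_mono A x y : x <= y -> rank A x <= rank A y.
Proof. induction 1; simpl; lia. Qed.

Lemma rank_strict A x y : A x -> x < y -> rank A x < rank A y.
Proof.
  intros Hx Hxy. apply Nat.lt_le_trans with (rank A (S x)).
  - simpl. unfold ind. destruct (excluded_middle_informative (A x)); [lia|contradiction].
  - apply rank_mono. lia.
Qed.

Lemma rank_inj A x y : A x -> A y -> rank A x = rank A y -> x = y.
Proof.
  intros Hx Hy E. destruct (Nat.lt_trichotomy x y) as [H|[H|H]]; auto.
  - pose proof (rank_strict A x y Hx H). lia.
  - pose proof (rank_strict A y x Hy H). lia.
Qed.

Lemma rank_surj A : (forall n, exists m, n <= m /\ A m) ->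
  forall i, exists x, A x /\ rank A x = i.
Proof.
  intros HA.
  assert (Hub: forall i, exists n, i < rank A n).
  { induction i.
    - destruct (HA 0) as [m [_ Hm]]. exists (S m). simpl. unfold ind.
      destruct (excluded_middle_informative (A m)); [lia|contradiction].
    - destruct IHi as [n Hn]. destruct (HA n) as [m [Hnm Hm]]. exists (S m). simpl. unfold ind.
      destruct (excluded_middle_informative (A m)); [|contradiction].
      pose proof (rank_mono A n m Hnm). lia. }
  assert (Hivt: forall n i, i < rank A n -> exists x, A x /\ rank A x = i).
  { induction n; intros i Hi; simpl in Hi; [lia|].
    destruct (Nat.lt_ge_cases i (rank A n)); [apply IHn; auto|].
    unfold ind in Hi. destruct (excluded_middle_informative (A n)); [|lia].
    exists n. split; auto. lia. }
  intro i. destruct (Hub i) as [n Hn]. apply (Hivt n). auto.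
Qed.

Lemma ext (D R : nat -> Prop) (phi : nat -> nat) :
  (forall x, D x -> R (phi x)) ->
  (forall x y, D x -> D y -> phi x = phi y -> x = y) ->
  (forall y, R y -> exists x, D x /\ phi x = y) ->
  (forall n, exists m, n <= m /\ ~ D m) ->
  (forall n, exists m, n <= m /\ ~ R m) ->
  exists p : Sinf, forall x, D x -> fwd p x = phi x.
Proof.
  intros HDR Hinj Hsurj HDc HRc.
  pose (enD := fun i => proj1_sig (constructive_indefinite_description _
                  (rank_surj (fun x => ~ D x) HDc i))).
  pose (enR := fun i => proj1_sig (constructive_indefinite_description _
                  (rank_surj (fun x => ~ R x) HRc i))).
  assert (enD1: forall i, ~ D (enD i) /\ rank (fun x => ~ D x) (enD i) = i).
  { intro i. unfold enD. destruct (constructive_indefinite_description _ _). auto. }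
  assert (enR1: forall i, ~ R (enR i) /\ rank (fun x => ~ R x) (enR i) = i).
  { intro i. unfold enR. destruct (constructive_indefinite_description _ _). auto. }
  assert (enD2: forall x, ~ D x -> enD (rank (fun x => ~ D x) x) = x).
  { intros x Hx. apply (rank_inj (fun x => ~ D x)); auto; apply enD1. }
  assert (enR2: forall x, ~ R x -> enR (rank (fun x => ~ R x) x) = x).
  { intros x Hx. apply (rank_inj (fun x => ~ R x)); auto; apply enR1. }
  assert (psi_ex: forall y, exists x, R y -> D x /\ phi x = y).
  { intro y. destruct (classic (R y)) as [H|H].
    - destruct (Hsurj y H) as [x Hx]. exists x. auto.
    - exists 0. tauto. }
  pose (psi := fun y => proj1_sig (constructive_indefinite_description _ (psi_ex y))).
  assert (Hpsi: forall y, R y -> D (psi y) /\ phi (psi y) = y).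
  { intro y. unfold psi. destruct (constructive_indefinite_description _ _). auto. }
  pose (f := fun x => if excluded_middle_informative (D x) then phi x
                      else enR (rank (fun x => ~ D x) x)).
  pose (g := fun y => if excluded_middle_informative (R y) then psi y
                      else enD (rank (fun x => ~ R x) y)).
  assert (Hfg: forall y, f (g y) = y).
  { intro y. unfold g. destruct (excluded_middle_informative (R y)) as [Hy|Hy].
    - destruct (Hpsi y Hy) as [H1 H2]. unfold f.
      destruct (excluded_middle_informative (D (psi y))); [auto|contradiction].
    - unfold f. destruct (enD1 (rank (fun x => ~ R x) y)) as [H1 H2].
      destruct (excluded_middle_informative (D _)); [contradiction|].
      rewrite H2. apply enR2. auto. }
  assert (Hgf: forall x, g (f x) = x).
  { intro x. unfold f. destruct (excluded_middle_informative (D x)) as [Hx|Hx].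
    - unfold g. destruct (excluded_middle_informative (R (phi x))) as [H|H].
      + destruct (Hpsi _ H) as [H1 H2]. apply Hinj; auto.
      + exfalso. apply H. auto.
    - unfold g. destruct (enR1 (rank (fun x => ~ D x) x)) as [H1 H2].
      destruct (excluded_middle_informative (R _)); [contradiction|].
      rewrite H2. apply enD2. auto. }
  exists (MkSinf f g Hfg Hgf). intros x Hx. simpl. unfold f.
  destruct (excluded_middle_informative (D x)); [auto|contradiction].
Qed.

Open Scope nat_scope.

Lemma bound_at (K : Sinf -> Prop) : compact_in Sinf_open K ->
  forall n, exists M, forall k, K k -> fwd k n < M /\ bwd k n < M.
Proof.
  intros HK n.
  set (U := fun m (q : Sinf) => fwd q n < m /\ bwd q n < m).
  destruct (HK (fun V => exists m, V = U m)) as [l [Hl Hcov]].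
  - intros V [m ->] q [H1 H2]. exists (S (n + bwd q n)). intros q' Hq'.
    assert (E1: fwd q' n = fwd q n) by (apply Hq'; lia).
    assert (E2: bwd q' n = bwd q n).
    { assert (H: fwd q' (bwd q n) = n) by (rewrite Hq' by lia; apply fwd_bwd).
      transitivity (bwd q' (fwd q' (bwd q n))); [rewrite H; auto | apply bwd_fwd]. }
    unfold U. split; lia.
  - intros q _. exists (U (S (fwd q n + bwd q n))). split; [eauto|]. unfold U; split; lia.
  - assert (Hb: exists M, forall V, In V l -> forall q, V q -> fwd q n < M /\ bwd q n < M).
    { clear Hcov. induction l as [|V l IH].
      - exists 0. intros V [].
      - destruct IH as [M HM]. { intros W HW. apply Hl. right; auto. }
        destruct (Hl V (or_introl eq_refl)) as [m ->].
        exists (M + m). intros W [<-|HW] q Hq.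
        + destruct Hq; lia.
        + destruct (HM W HW q Hq); lia. }
    destruct Hb as [M HM]. exists M. intros k Hk. destruct (Hcov k Hk) as [V [HV Vk]]. eauto.
Qed.

Fixpoint sumb (b : nat -> nat) n := match n with 0 => 0 | S n' => sumb b n' + b n' end.
Lemma sumb_ge b x n : x < n -> b x <= sumb b n.
Proof. induction n; intro H; simpl; [lia|]. destruct (Nat.eq_dec x n); [subst; lia|]. specialize (IHn ltac:(lia)); lia. Qed.

Lemma bounds K : compact_in Sinf_open K -> exists beta : nat -> nat, (forall n, n <= beta n) /\
  forall k, K k -> forall x n, x < n -> fwd k x < beta n /\ bwd k x < beta n.
Proof.
  intro HK.
  pose (b := fun n => proj1_sig (constructive_indefinite_description _ (bound_at K HK n))).
  assert (Hb: forall n k, K k -> fwd k n < b n /\ bwd k n < b n).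
  { intros n. unfold b. destruct (constructive_indefinite_description _ _). auto. }
  exists (fun n => n + sumb b n). split; [intro; lia|].
  intros k Hk x n Hxn. pose proof (sumb_ge b x n Hxn). destruct (Hb x k Hk). lia.
Qed.

Fixpoint st (beta : nat -> nat) (t : nat) : nat * nat * nat :=
  match t with
  | 0 => (0, 0, 1)
  | S t' => let '(c, e, s) := st beta t' in
            let s' := beta (e + s) in let c' := c + s' + 1 in (c', beta c' + 1, s')
  end.
Definition cc beta t := fst (fst (st beta t)).
Definition ee beta t := snd (fst (st beta t)).
Definition ss beta t := snd (st beta t).
Lemma st_S beta t : ss beta (S t) = beta (ee beta t + ss beta t) /\
  cc beta (S t) = cc beta t + ss beta (S t) + 1 /\ ee beta (S t) = beta (cc beta (S t)) + 1.
Proof. unfold cc, ee, ss. simpl. destruct (st beta t) as [[c e] s]. simpl. auto. Qed.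

Lemma part1_beta (K : Sinf -> Prop) (beta : nat -> nat) : (forall n, n <= beta n) ->
  (forall k, K k -> forall x n, x < n -> fwd k x < beta n /\ bwd k x < beta n) ->
  exists p : Sinf, forall k, K k -> has_infinite_cycle (smul p k).
Proof.
  intros Hge Hbd.
  set (c := cc beta). set (e := ee beta). set (s := ss beta).
  assert (HS: forall t, s (S t) = beta (e t + s t) /\ c (S t) = c t + s (S t) + 1 /\
                        e (S t) = beta (c (S t)) + 1) by apply st_S.
  assert (c0: c 0 = 0) by reflexivity. assert (e0: e 0 = 0) by reflexivity.
  assert (s0: s 0 = 1) by reflexivity.
  assert (cge: forall t, t <= c t).
  { induction t; [lia|]. destruct (HS t) as (_&H&_). lia. }
  assert (ege: forall t, t <= e t).
  { destruct t; [lia|]. destruct (HS t) as (_&_&H). pose proof (Hge (c (S t))). pose proof (cge (S t)). lia. }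
  assert (cinc: forall t u, t < u -> c (S t) <= c u).
  { intros t u H. induction H; [lia|]. destruct (HS m) as (_&H1&_). lia. }
  assert (estep: forall t, e t + s t < e (S t)).
  { intro t. destruct (HS t) as (H1&H2&H3). pose proof (Hge (c (S t))). pose proof (Hge (e t + s t)). lia. }
  assert (einc: forall t u, t < u -> e t + s t < e u).
  { intros t u H. induction H; [apply estep|]. pose proof (estep m). lia. }
  assert (blk_ex: forall z, exists t, c t <= z < c (S t)).
  { induction z.
    - exists 0. destruct (HS 0) as (_&H&_). lia.
    - destruct IHz as [t Ht]. destruct (Nat.lt_ge_cases (S z) (c (S t))).
      + exists t. lia.
      + exists (S t). destruct (HS (S t)) as (_&H1&_). lia. }
  assert (blk_u: forall z t u, c t <= z < c (S t) -> c u <= z < c (S u) -> t = u).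
  { intros z t u H1 H2. destruct (Nat.lt_trichotomy t u) as [H|[H|H]]; auto.
    - pose proof (cinc t u H). lia.
    - pose proof (cinc u t H). lia. }
  pose (blk := fun z => proj1_sig (constructive_indefinite_description _ (blk_ex z))).
  assert (Hblk: forall z, c (blk z) <= z < c (S (blk z))).
  { intro z. unfold blk. destruct (constructive_indefinite_description _ _). auto. }
  pose (D := fun z => exists t, c t <= z < c t + s (S t)).
  pose (R := fun y => exists t, e (S t) <= y < e (S t) + s (S t)).
  pose (phi := fun z => e (S (blk z)) + (z - c (blk z))).
  assert (Dblk: forall z t, c t <= z < c t + s (S t) -> blk z = t).
  { intros z t H. apply (blk_u z); auto. destruct (HS t) as (_&H1&_). lia. }
  destruct (ext D R phi) as [p Hp].
  - intros x [t Ht]. exists t. unfold phi. rewrite (Dblk x t Ht). lia.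
  - intros x y [t Ht] [u Hu] E. unfold phi in E. rewrite (Dblk x t Ht), (Dblk y u Hu) in E.
    destruct (Nat.lt_trichotomy t u) as [H|[H|H]].
    + pose proof (einc (S t) (S u) ltac:(lia)). lia.
    + subst. lia.
    + pose proof (einc (S u) (S t) ltac:(lia)). lia.
  - intros y [t Ht]. exists (c t + (y - e (S t))).
    assert (Hd: c t <= c t + (y - e (S t)) < c t + s (S t)) by lia.
    split; [exists t; auto|]. unfold phi. rewrite (Dblk _ t Hd). lia.
  - intro n. exists (c n + s (S n)). split; [pose proof (cge n); lia|].
    intros [t Ht]. destruct (Nat.lt_trichotomy t n) as [H|[H|H]].
    + pose proof (cinc t n H). destruct (HS t) as (_&H1&_). lia.
    + subst. lia.
    + pose proof (cinc n t H). destruct (HS n) as (_&H1&_). lia.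
  - intro n. exists (e (S n) + s (S n)). split; [pose proof (ege (S n)); lia|].
    intros [t Ht]. destruct (Nat.lt_trichotomy t n) as [H|[H|H]].
    + pose proof (einc (S t) (S n) ltac:(lia)). lia.
    + subst. lia.
    + pose proof (einc (S n) (S t) ltac:(lia)). lia.
  - exists p. intros k Hk.
    assert (Hit: forall t, e t <= Nat.iter t (fwd (smul p k)) 0 < e t + s t).
    { induction t; [simpl; lia|].
      set (y := Nat.iter t (fwd (smul p k)) 0) in *.
      change (Nat.iter (S t) (fwd (smul p k)) 0) with (fwd p (fwd k y)).
      set (z := fwd k y).
      assert (Hz: c t <= z < c t + s (S t)).
      { split.
        - destruct t as [|t']; [lia|].
          destruct (Nat.lt_ge_cases z (c (S t'))) as [H|H]; [|auto].
          exfalso. destruct (Hbd k Hk z (c (S t')) H) as [_ H2].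
          unfold z in H2. rewrite bwd_fwd in H2. destruct (HS t') as (_&_&H3). lia.
        - destruct (Hbd k Hk y (e t + s t) ltac:(lia)) as [H1 _].
          destruct (HS t) as (H2&_). fold z in H1. lia. }
      rewrite Hp by (exists t; auto). unfold phi. rewrite (Dblk z t Hz). lia. }
    exists 0. intros [l Hl].
    set (t := S (list_max l)).
    assert (Hin: In (Nat.iter t (fwd (smul p k)) 0) l).
    { apply Hl. exists (Z.of_nat t). unfold t. simpl. unfold zpow.
      rewrite SuccNat2Pos.id_succ. reflexivity. }
    pose proof (In_le_max _ _ Hin). pose proof (Hit t). pose proof (ege t). unfold t in *. lia.
Qed.

Lemma part1 : forall K : Sinf -> Prop, compact_in Sinf_open K ->
     exists p : Sinf, forall k, K k -> has_infinite_cycle (smul p k).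
Proof.
  intros K HK. destruct (bounds K HK) as [beta [H1 H2]]. eapply part1_beta; eauto.
Qed.

Open Scope R_scope.

Lemma Sinf_ext (p q : Sinf) : (forall n, fwd p n = fwd q n) -> p = q.
Proof.
  intro H. destruct p as [f1 g1 a1 b1], q as [f2 g2 a2 b2]. simpl in H.
  assert (Ef: f1 = f2) by (apply functional_extensionality; auto). subst f2.
  assert (Eg: g1 = g2).
  { apply functional_extensionality. intro n.
    rewrite <- (a2 n) at 1. apply b1. }
  subst g2. f_equal; apply proof_irrelevance.
Qed.

Lemma ball_open {K} (d : K -> K -> R) : is_metric d -> forall x r,
  metric_open d (fun y => d x y < r).
Proof.
  intros (Hp & Hz & Hs & Ht) x r y Hy. exists (r - d x y). split; [lra|].
  intros z Hz'. pose proof (Ht x y z). lra.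
Qed.

Lemma baire_step {K} (d : K -> K -> R) (F : K -> Prop) : is_metric d ->
  nowhere_dense (metric_open d) F ->
  forall x r, 0 < r -> exists x' r', 0 < r' /\
     (forall y, d x' y < r' -> d x y < r / 2 /\ ~ F y).
Proof.
  intros Hm HF x r Hr. pose proof Hm as (Hp & Hz & Hs & Ht).
  set (U := fun y => d x y < r / 2).
  assert (HU: metric_open d U) by (apply ball_open; auto).
  destruct (classic (forall y, U y -> closure (metric_open d) F y)) as [H|H].
  - exfalso. apply (HF U HU H x). unfold U. rewrite (proj2 (Hz x x) eq_refl). lra.
  - apply not_all_ex_not in H. destruct H as [y Hy].
    apply imply_to_and in Hy. destruct Hy as [Uy Hcl].
    unfold closure in Hcl. apply not_all_ex_not in Hcl. destruct Hcl as [V HV].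
    apply imply_to_and in HV. destruct HV as [Vo HV]. apply imply_to_and in HV.
    destruct HV as [Vy HV].
    destruct (Vo y Vy) as [e1 [He1 H1]]. destruct (HU y Uy) as [e2 [He2 H2]].
    exists y, (Rmin e1 e2). split; [apply Rmin_pos; auto|].
    intros z Hz'. split.
    + apply H2. pose proof (Rmin_r e1 e2). lra.
    + intro Fz. apply HV. exists z. split; auto. apply H1. pose proof (Rmin_l e1 e2). lra.
Qed.

Fixpoint rseq {A} (a0 : A) (g : nat -> A -> A) (n : nat) : A :=
  match n with O => a0 | S m => g m (rseq a0 g m) end.

Lemma baire {K} (d : K -> K -> R) : inhabited K -> is_metric d ->
  compact_in (metric_open d) (fun _ => True) ->
  forall A, meager (metric_open d) A -> (forall x, A x) -> False.
Proof.
  intros [x0] Hm Hc A [F [HF HA]] Hall. pose proof Hm as (Hp & Hz & Hs & Ht).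
  assert (step: forall n (xr : K * R), exists xr' : K * R, 0 < snd xr ->
     0 < snd xr' /\ (forall y, d (fst xr') y < snd xr' -> d (fst xr) y < snd xr / 2 /\ ~ F n y)).
  { intros n [x r]. destruct (Rlt_dec 0 r) as [Hr|Hr].
    - destruct (baire_step d (F n) Hm (HF n) x r Hr) as (x' & r' & H1 & H2).
      exists (x', r'). simpl. auto.
    - exists (x, r). simpl. intro; contradiction. }
  pose (g := fun n xr => proj1_sig (constructive_indefinite_description _ (step n xr))).
  assert (Hg: forall n xr, 0 < snd xr -> 0 < snd (g n xr) /\
      (forall y, d (fst (g n xr)) y < snd (g n xr) -> d (fst xr) y < snd xr / 2 /\ ~ F n y)).
  { intros n xr. unfold g. destruct (constructive_indefinite_description _ _). auto. }
  pose (sq := rseq (x0, 1) g).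
  set (xs := fun n => fst (sq n)). set (rs := fun n => snd (sq n)).
  assert (rpos: forall n, 0 < rs n).
  { induction n; [unfold rs; simpl; lra|]. unfold rs. simpl. apply Hg. apply IHn. }
  assert (Hstep: forall n y, d (xs (S n)) y < rs (S n) -> d (xs n) y < rs n / 2 /\ ~ F n y).
  { intros n y. unfold xs, rs. simpl. apply Hg. apply rpos. }
  set (cl := fun n y => d (xs n) y <= rs n / 2).
  assert (clS: forall n y, cl (S n) y -> cl n y).
  { intros n y H. unfold cl in *. pose proof (rpos (S n)).
    destruct (Hstep n y ltac:(lra)). lra. }
  assert (clle: forall n N y, (n <= N)%nat -> cl N y -> cl n y).
  { intros n N y H. induction H; auto. }
  assert (Hex: exists z, forall n, cl n z).
  { apply NNPP. intro Hno.
    assert (Hcov: forall z, exists n, rs n / 2 < d (xs n) z).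
    { intro z. apply NNPP. intro H. apply Hno. exists z. intro n. unfold cl.
      apply Rnot_lt_le. intro H'. apply H. eauto. }
    destruct (Hc (fun U => exists n, U = (fun y => rs n / 2 < d (xs n) y))) as [l [Hl Hl2]].
    - intros U [n ->] y Hy. exists (d (xs n) y - rs n / 2). split; [lra|].
      intros z Hz'. pose proof (Ht (xs n) z y). rewrite (Hs z y) in H. lra.
    - intros z _. destruct (Hcov z) as [n Hn]. eexists; split; [eexists; reflexivity|]. exact Hn.
    - assert (HN: exists N, forall U, In U l -> exists n, (n <= N)%nat /\ U = (fun y => rs n / 2 < d (xs n) y)).
      { clear Hl2. induction l as [|U l IH].
        - exists 0%nat. intros U [].
        - destruct IH as [N HN]. { intros W HW. apply Hl. right; auto. }
          destruct (Hl U (or_introl eq_refl)) as [m ->].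
          exists (N + m)%nat. intros W [<-|HW].
          + exists m. split; [lia|auto].
          + destruct (HN W HW) as [n [Hn ->]]. exists n. split; [lia|auto]. }
      destruct HN as [N HN]. destruct (Hl2 (xs N) I) as [U [HU UxN]].
      destruct (HN U HU) as [n [Hn ->]].
      assert (cl N (xs N)).
      { unfold cl. rewrite (proj2 (Hz _ _) eq_refl). pose proof (rpos N). lra. }
      pose proof (clle n N (xs N) Hn H). unfold cl in H0. lra. }
  destruct Hex as [z Hzc]. destruct (HA z (Hall z)) as [n Hn].
  pose proof (Hzc (S n)) as H. unfold cl in H. pose proof (rpos (S n)).
  destruct (Hstep n z ltac:(lra)) as [_ H2]. contradiction.
Qed.

Lemma img_compact {K} (d : K -> K -> R) (f : K -> Sinf) :
  continuous (metric_open d) Sinf_open f -> compact_in (metric_open d) (fun _ => True) ->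
  compact_in Sinf_open (fun q => exists x, f x = q).
Proof.
  intros Hf Hc C HCo Hcov.
  destruct (Hc (fun V => exists U, C U /\ V = (fun x => U (f x)))) as [l [Hl Hl2]].
  - intros V [U [HU ->]]. apply Hf. auto.
  - intros x _. destruct (Hcov (f x) (ex_intro _ x eq_refl)) as [U [HU Ux]].
    exists (fun x => U (f x)). split; eauto.
  - assert (Hlift: exists l', (forall U, In U l' -> C U) /\
        forall V, In V l -> exists U, In U l' /\ forall x, V x -> U (f x)).
    { clear Hl2. induction l as [|V l IH].
      - exists nil. split; intros ? [].
      - destruct IH as [l' [H1 H2]]. { intros W HW. apply Hl. right; auto. }
        destruct (Hl V (or_introl eq_refl)) as [U [HU ->]].
        exists (U :: l'). split.
        + intros W [<-|HW]; auto.
        + intros W [<-|HW].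
          * exists U. split; [left; auto|auto].
          * destruct (H2 W HW) as [U' [HU' H']]. exists U'. split; [right; auto|auto]. }
    destruct Hlift as [l' [H1 H2]]. exists l'. split; auto.
    intros q [x <-]. destruct (Hl2 x I) as [V [HV Vx]]. destruct (H2 V HV) as [U [HU HU']].
    eauto.
Qed.

Definition idS : Sinf := MkSinf (fun n => n) (fun n => n) (fun n => eq_refl) (fun n => eq_refl).

Lemma part2 : ~ haar_meager has_infinite_cycle.
Proof.
  intros (B & _ & HB & K & d & Hinh & Hmet & Hcomp & f & Hcont & Hmeag).
  destruct (part1 _ (img_compact d f Hcont Hcomp)) as [p Hp].
  apply (baire d Hinh Hmet Hcomp _ (Hmeag (inv p) idS)).
  intro x. replace (smul (inv (inv p)) (smul (f x) (inv idS))) with (smul p (f x)).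
  - apply HB. apply Hp. eauto.
  - apply Sinf_ext. intro n. reflexivity.
Qed.


Theorem mainTheorem16 :
  (forall K : Sinf -> Prop, compact_in Sinf_open K ->
     exists p : Sinf, forall k, K k -> has_infinite_cycle (smul p k)) /\
  ~ haar_meager has_infinite_cycle /\
  meager Sinf_open has_infinite_cycle.
Proof.
  split; [exact part1|split; [exact part2|exact part3]].
Qed.
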